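(* Let $X$ be a finite set with $|X|=n$, $0\notin X$, $W=X\cup\{0\}$. Let $\mathfrak{V}$ be a $\big(\binom{n}{2}_{\,n-2}\ \binom{n}{3}_{\,3}\big)$-configuration whose point set is $\mathcal{P}_2(X)$, and let $\mathfrak{M}$ be the structure with point set $\mathcal{P}_2(W)$ whose lines are the lines of $\mathfrak{V}$ together with all sets $\{\{0,x\},\{0,y\},\{x,y\}\}$ for distinct $x,y\in X$. If $H$ is a hyperplane of $\mathfrak{M}$, then there is a subset $A$ of $W$ such that $H=\mathcal{H}(A\,|\,W\setminus A):=\mathcal{P}_2(A)\cup\mathcal{P}_2(W\setminus A)$.
   Context: $\mathcal{P}_2(Y)$ denotes the set of $2$-element subsets of $Y$. A $(v_r\ b_k)$-configuration is a partial linear space with $v$ points and $b$ lines, each point on exactly $r$ lines and each line containing exactly $k$ points. (Every binomial partial Steiner triple system with $\binom{n+1}{2}$ points freely containing a complete graph $K_n$ is isomorphic to such an $\mathfrak{M}$.) A subspace is a set of points containing every line that meets it in at least two points; a hyperplane is a proper subspace meeting every line. *)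

(* Defs.v *)
From mathcomp Require Import all_boot.
Set Implicit Arguments. Unset Strict Implicit. Unset Printing Implicit Defensive.

Definition P2 (T : finType) (A : {set T}) : {set {set T}} :=
  [set p : {set T} | (p \subset A) && (#|p| == 2)].

Definition configuration (T : finType) (P : {set T}) (Ls : {set {set T}})
    (v r b k : nat) : Prop :=
  [/\ #|P| = v, #|Ls| = b,
      (forall L, L \in Ls -> L \subset P /\ #|L| = k),
      (forall p, p \in P -> #|[set L in Ls | p \in L]| = r) &
      (forall L1 L2, L1 \in Ls -> L2 \in Ls -> L1 != L2 -> #|L1 :&: L2| <= 1)].

Definition subspace (T : finType) (P : {set T}) (Ls : {set {set T}})
    (S : {set T}) : Prop :=
  S \subset P /\ (forall L, L \in Ls -> 1 < #|L :&: S| -> L \subset S).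

Definition hyperplane (T : finType) (P : {set T}) (Ls : {set {set T}})
    (H : {set T}) : Prop :=
  [/\ subspace P Ls H, H \proper P &
      (forall L, L \in Ls -> L :&: H != set0)].

(* W = X ∪ {0} is modelled as option X, with None playing the role of 0. *)
Definition liftP (X : finType) (p : {set X}) : {set option X} := Some @: p.
Definition liftL (X : finType) (L : {set {set X}}) : {set {set option X}} :=
  (@liftP X) @: L.

Definition triangles (X : finType) : {set {set {set option X}}} :=
  [set T : {set {set option X}} | [exists x : X, exists y : X,
     (x != y) && (T == [set [set None; Some x]; [set None; Some y];
                           [set Some x; Some y]])]].

Definition M_lines (X : finType) (V : {set {set {set X}}}) :
    {set {set {set option X}}} :=
  ((@liftL X) @: V) :|: triangles X.

Definition Hsplit (W : finType) (A : {set W}) : {set {set W}} :=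
  P2 A :|: P2 (~: A).

(* Main.v *)
Require Import Defs.
From mathcomp Require Import all_boot.

Lemma two_sub {T : finType} {Ls : {set {set T}}} {P H L : {set T}} {u v} :
  subspace P Ls H -> L \in Ls -> u != v -> u \in L -> v \in L ->
  u \in H -> v \in H -> L \subset H.
Proof.
move=> [_ sH] hL uv uL vL uH vH; apply: (sH _ hL).
have : [set u; v] \subset L :&: H.
  by apply/subsetP=> z; rewrite !inE => /orP[] /eqP ->; rewrite ?uL ?vL ?uH ?vH.
by move/subset_leq_card; rewrite cards2 uv.
Qed.

Theorem theorem3p5 (X : finType) (V : {set {set {set X}}})
    (hV : configuration (P2 [set: X]) V 'C(#|X|, 2) (#|X| - 2) 'C(#|X|, 3) 3)
    (H : {set {set option X}})
    (hH : hyperplane (P2 [set: option X]) (M_lines V) H) :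
  exists A : {set option X}, H = Hsplit A.
Proof.
case: hH => hS _ hmeet.
pose A := [set w : option X | if w is Some x then [set None; Some x] \in H else true].
have key : forall x y : X, x != y ->
    ([set Some x; Some y] \in H) = (([set None; Some x] \in H) == ([set None; Some y] \in H)).
  move=> x y xy.
  set px := [set None; Some x]; set py := [set None; Some y]; set pxy := [set Some x; Some y].
  have TL : [set px; py; pxy] \in M_lines V.
    rewrite /M_lines inE; apply/orP; right; rewrite inE.
    by apply/existsP; exists x; apply/existsP; exists y; rewrite xy eqxx.
  have Sxy : Some x != Some y by [].
  have npxpy : px != py.
    apply/negP=> /eqP e; have : Some y \in px by rewrite e !inE eqxx orbT.
    by rewrite !inE /= eq_sym (negbTE Sxy).
  have npxpxy : px != pxy.
    apply/negP=> /eqP e; have : None \in pxy by rewrite -e !inE eqxx.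
    by rewrite !inE.
  have npypxy : py != pxy.
    apply/negP=> /eqP e; have : None \in pxy by rewrite -e !inE eqxx.
    by rewrite !inE.
  have inT1 : px \in [set px; py; pxy] by rewrite !inE eqxx.
  have inT2 : py \in [set px; py; pxy] by rewrite !inE eqxx orbT.
  have inT3 : pxy \in [set px; py; pxy] by rewrite !inE eqxx !orbT.
  case hx: (px \in H); case hy: (py \in H) => /=.
  - have := two_sub hS TL npxpy inT1 inT2 hx hy.
    by move/subsetP/(_ _ inT3)->.
  - apply/negP=> hxy.
    have := two_sub hS TL npxpxy inT1 inT3 hx hxy.
    by move/subsetP/(_ _ inT2); rewrite hy.
  - apply/negP=> hxy.
    have := two_sub hS TL npypxy inT2 inT3 hy hxy.
    by move/subsetP/(_ _ inT1); rewrite hx.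
  - have := hmeet _ TL; case/set0Pn=> z; rewrite !inE => /andP[].
    by case/orP=> [/orP[]|] /eqP ->; rewrite ?hx ?hy.
have key2 : forall a b : option X, a != b ->
    ([set a; b] \in H) = ((a \in A) == (b \in A)).
  move=> [x|] [y|] //= ab; rewrite !inE /=.
  - by apply: key; apply: contra ab => /eqP ->.
  - by rewrite setUC eqb_id.
  - by rewrite eq_sym eqb_id.
exists A; apply/setP=> p; rewrite /Hsplit /P2 !inE.
case: (boolP (#|p| == 2)) => [/cards2P [a [b [ab ->]]]|np].
  rewrite key2 // !andbT !subUset !sub1set !in_setC.
  by case: (a \in A); case: (b \in A).
rewrite !andbF; apply/negP=> pH.
case: hS => /subsetP /(_ _ pH); rewrite inE => /andP[_].
by rewrite (negbTE np).
Qed.
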